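(* Let $n\ge 3$ and let $G$ be a unicyclic graph on $n$ vertices. (1) $\mathrm{irr}_t(G)\ge 0$, with equality if and only if $G\cong C_n$. (2) If moreover $n\ge 4$ and $G\not\cong C_n$, then $\mathrm{irr}_t(G)\ge 2n-2$. Equality holds if and only if the degree sequence of $G$ is $(3,2,\ldots,2,1)$, i.e. one vertex of degree $3$, $n-2$ vertices of degree $2$ and one vertex of degree $1$.
   Context: A unicyclic graph is a simple connected graph whose number of edges equals its number of vertices. For a graph $G=(V,E)$ and $w\in V$, $d_G(w)$ is the degree of $w$. The total irregularity is $\mathrm{irr}_t(G)=\frac12\sum_{x,y\in V}|d_G(x)-d_G(y)|$, where the sum runs over all ordered pairs of vertices. $C_n$ is the cycle on $n$ vertices. Degree sequences are listed in nonincreasing order. *)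

(* Defs.v *)
From HB Require Import structures.
From mathcomp Require Import all_boot all_order all_algebra.
Set Implicit Arguments. Unset Strict Implicit. Unset Printing Implicit Defensive.
Import Order.TTheory GRing.Theory Num.Theory.

Definition simple_graph (T : finType) (e : rel T) : Prop :=
  symmetric e /\ irreflexive e.

Definition edges (T : finType) (e : rel T) : {set {set T}} :=
  [set [set p.1; p.2] | p in [set p : T * T | e p.1 p.2]].

Definition connected (T : finType) (e : rel T) : Prop :=
  forall x y : T, connect e x y.

Definition unicyclic (T : finType) (e : rel T) : Prop :=
  simple_graph e /\ connected e /\ #|edges e| = #|T|.

Definition deg (T : finType) (e : rel T) (w : T) : nat := #|[set y | e w y]|.

Definition irr_t (T : finType) (e : rel T) : rat :=
  (1 / 2 * \sum_(x : T) \sum_(y : T) `|(deg e x)%:R - (deg e y)%:R|)%R.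

Definition cycle_rel (n : nat) : rel 'I_n :=
  fun i j => (j == (i.+1 %% n) :> nat) || (i == (j.+1 %% n) :> nat).

Definition iso_cycle (T : finType) (e : rel T) (n : nat) : Prop :=
  exists f : T -> 'I_n, bijective f /\ forall x y, e x y = @cycle_rel n (f x) (f y).

Definition degseq (T : finType) (e : rel T) : seq nat :=
  sort geq [seq deg e x | x <- enum T].

(* Main.v *)
Require Import Defs.
From HB Require Import structures.
From mathcomp Require Import all_boot all_order all_algebra.
From mathcomp Require Import zify ring lra.
Import Order.TTheory GRing.Theory Num.Theory.
Set Implicit Arguments. Unset Strict Implicit.


Lemma set2_eq (T : finType) (x y a b : T) : x != y -> a != b ->
  ([set x; y] == [set a; b]) = ((x, y) == (a, b)) || ((x, y) == (b, a)).
Proof.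
move=> nxy nab; apply/idP/idP.
- move/eqP=> E.
  have hx : x \in [set a; b] by rewrite -E !inE eqxx.
  have hy : y \in [set a; b] by rewrite -E !inE eqxx orbT.
  move: hx hy nxy; rewrite !inE => /orP[]/eqP-> /orP[]/eqP->; rewrite ?eqxx ?orbT //=.
- by case/orP=> /eqP[-> ->]; rewrite // setUC.
Qed.

Lemma deg_sum (T : finType) (e : rel T) : simple_graph e ->
  \sum_x deg e x = 2 * #|edges e|.
Proof.
move=> [sym irr].
pose P := [set p : T * T | e p.1 p.2].
have -> : \sum_x deg e x = #|P|.
  rewrite -sum1_card.
  rewrite (eq_bigl (fun p : T * T => e p.1 p.2)); last by move=> p; rewrite inE.
  rewrite -(pair_big_dep xpredT (fun x y => e x y) (fun _ _ => 1)) /=.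
  apply: eq_bigr => x _; rewrite /deg -sum1_card.
  by apply: eq_bigl => y; rewrite inE.
rewrite -sum1_card (partition_big_imset (fun p : T * T => [set p.1; p.2])) /=.
rewrite mulnC -sum_nat_const; apply: eq_bigr => E /imsetP[[a b]].
rewrite inE /= => eab ->.
have nab : a != b by apply/eqP => h; move: eab; rewrite h irr.
rewrite (eq_bigl (fun p => p \in [set (a, b); (b, a)])).
  rewrite sum1_card cards2; case: eqP => // [[h _]]; by rewrite h eqxx in nab.
move=> [x y]; rewrite !inE /=.
case exy: (e x y) => /=.
  have nxy : x != y by apply/eqP => h; move: exy; rewrite h irr.
  by rewrite set2_eq.
apply/esym/negbTE; apply/negP => /orP[]/eqP[hx hy]; subst x y.
  by rewrite eab in exy.
by rewrite sym eab in exy.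
Qed.


Lemma nb2 (T : finType) (e : rel T) (x y1 y2 y : T) : deg e x = 2 ->
  e x y1 -> e x y2 -> y1 != y2 -> e x y -> (y == y1) || (y == y2).
Proof.
move=> dx e1 e2 n12 ey.
have sub : [set y1; y2] \subset [set w | e x w].
  by apply/subsetP => z; rewrite !inE => /orP[]/eqP->.
have : [set y1; y2] == [set w | e x w].
  by rewrite eqEcard sub /= cards2 n12 -/(deg e x) dx.
move/eqP => E; have : y \in [set w | e x w] by rewrite inE.
by rewrite -E !inE.
Qed.

Definition other (T : finType) (e : rel T) (x p : T) : T :=
  odflt p [pick w | e x w && (w != p)].

Lemma other_spec (T : finType) (e : rel T) (x p : T) : deg e x = 2 ->
  e x (other e x p) && (other e x p != p).
Proof.
move=> dx; rewrite /other; case: pickP => [w -> //|none].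
have : [set w | e x w] \subset [set p].
  apply/subsetP => z; rewrite !inE => exz; move: (none z); rewrite exz /=.
  by move/negbFE.
move/subset_leq_card; rewrite cards1 -/(deg e x) dx.
by [].
Qed.

Definition step (T : finType) (e : rel T) (s : T * T) : T * T :=
  (s.2, other e s.2 s.1).

Definition walk (T : finType) (e : rel T) (x0 x1 : T) (k : nat) : T :=
  (iter k (step e) (x0, x1)).1.

Lemma walkS2 (T : finType) (e : rel T) x0 x1 k :
  walk e x0 x1 k.+2 = other e (walk e x0 x1 k.+1) (walk e x0 x1 k).
Proof. by rewrite /walk !iterS. Qed.

Lemma walk_adj (T : finType) (e : rel T) x0 x1 k : symmetric e ->
  (forall x, deg e x = 2) -> e x0 x1 -> e (walk e x0 x1 k) (walk e x0 x1 k.+1).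
Proof.
move=> sym d2 e01; rewrite /walk iterS.
suff : e (iter k (step e) (x0, x1)).1 (iter k (step e) (x0, x1)).2 by [].
elim: k => [//|k IH]; rewrite iterS /step /=.
by case/andP: (other_spec (iter k (step e) (x0, x1)).1 (d2 (iter k (step e) (x0, x1)).2)).
Qed.

Lemma walk_ne (T : finType) (e : rel T) x0 x1 k :
  (forall x, deg e x = 2) -> walk e x0 x1 k.+2 != walk e x0 x1 k.
Proof.
move=> d2; rewrite walkS2.
by case/andP: (other_spec (walk e x0 x1 k) (d2 (walk e x0 x1 k.+1))).
Qed.

Lemma walk_nb (T : finType) (e : rel T) x0 x1 k y : symmetric e ->
  (forall x, deg e x = 2) -> e x0 x1 -> e (walk e x0 x1 k.+1) y ->
  (y == walk e x0 x1 k) || (y == walk e x0 x1 k.+2).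
Proof.
move=> sym d2 e01 ey; apply: nb2 (d2 _) _ _ _ ey.
- by rewrite sym walk_adj.
- exact: walk_adj.
- by rewrite eq_sym walk_ne.
Qed.

Lemma connect_ind (T : finType) (e : rel T) (Q : pred T) x y :
  (forall a b, e a b -> Q a -> Q b) -> Q x -> connect e x y -> Q y.
Proof.
move=> cl Qx /connectP[p pth ->]; elim: p x Qx pth => [//|z p IH] x Qx /= /andP[exz pth].
exact: IH (cl _ _ exz Qx) pth.
Qed.


Lemma two_reg_cycle (T : finType) (e : rel T) (n : nat) :
  symmetric e -> irreflexive e -> connected e -> (forall x, deg e x = 2) ->
  #|T| = n -> 3 <= n -> iso_cycle e n.
Proof.
move=> sym irr con d2 cT n3.
have [x0 _] : exists x0 : T, x0 \in T by apply/card_gt0P; rewrite cT; lia.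
have [x1] : exists x1, x1 \in [set y | e x0 y] by apply/card_gt0P; rewrite -/(deg e x0) d2.
rewrite inE => e01.
pose w := walk e x0 x1.
have adj k : e (w k) (w k.+1) by exact: walk_adj.
have ne2 k : w k.+2 != w k by exact: walk_ne.
have nb k y : e (w k.+1) y -> (y == w k) || (y == w k.+2) by exact: walk_nb.
pose P m := [exists i : 'I_m, w i == w m].
have exP : exists m, P m.
  case: (boolP [exists m : 'I_n.+1, P m]) => [/existsP[m Pm]|nP]; first by exists m.
  suff : injective (fun i : 'I_n.+1 => w i).
    by move/leq_card; rewrite card_ord cT ltnn.
  move=> i j eij; apply/val_inj => /=.
  wlog lij : i j eij / i <= j.
    by move=> H; case: (leqP i j) => h; [|apply/esym]; apply: H => //; apply: ltnW.
  apply/eqP; rewrite eqn_leq lij /= leqNgt; apply/negP => ltij.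
  move/existsP: nP; apply; exists j; apply/existsP.
  by exists (Ordinal ltij); rewrite /= eij.
case: (ex_minnP exP) => m Pm minm.
have dist i j : i < m -> j < m -> w i = w j -> i = j.
  move=> im jm eij.
  wlog lij : i j im jm eij / i <= j.
    by move=> H; case: (leqP i j) => h; [|apply/esym]; apply: H => //; apply: ltnW.
  apply/eqP; rewrite eqn_leq lij /= leqNgt; apply/negP => ltij.
  have : P j by apply/existsP; exists (Ordinal ltij); rewrite /= eij.
  by move/minm; rewrite leqNgt jm.
have wm0 : w m = w 0.
  case/existsP: Pm => [[j jm]] /= /eqP ejm.
  case: j jm ejm => [//|j] jm ejm.
  case: (eqVneq m j.+2) => [mj|mj].
    by move: (adj j.+1); rewrite ejm -mj irr.
  have : e (w j.+1) (w m.-1).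
    have := adj m.-1; rewrite prednK; last by lia.
    by rewrite -ejm sym.
  move/nb => /orP[]/eqP h.
  - have := dist m.-1 j; move/(_ ltac:(lia) ltac:(lia) h); lia.
  - have m1 : m.-1 < m by lia.
    case: (eqVneq j.+2 m.-1) => [hj|hj].
      have hm : m = j.+3 by lia.
      by move: (ne2 j.+1); rewrite -hm -ejm eqxx.
    have := dist m.-1 j.+2 m1; move/(_ ltac:(lia) h).
    by move/eqP: hj; move/eqP: mj; lia.
have m3 : 3 <= m.
  case: m Pm minm dist wm0 => [/existsP[[]]//|[|[|m]]] Pm minm dist wm0 //.
  - by move: (adj 0); rewrite wm0 irr.
  - by move: (ne2 0); rewrite wm0 eqxx.
pose Q y := [exists k : 'I_m, w k == y].
have inQ k : k < m -> Q (w k) by move=> km; apply/existsP; exists (Ordinal km).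
have inQm : Q (w m) by rewrite wm0; apply: inQ; lia.
have cl a b : e a b -> Q a -> Q b.
  move=> eab /existsP[[k km]] /= /eqP ka; subst a.
  case: k km eab => [|k] km eab.
    have e0m : e (w 0) (w m.-1).
      have := adj m.-1; rewrite prednK; last by lia.
      by rewrite wm0 sym.
    have n1 : w 1 != w m.-1.
      by apply/eqP => h; have := dist 1 m.-1; move/(_ ltac:(lia) ltac:(lia) h); lia.
    case/orP: (nb2 (d2 _) (adj 0) e0m n1 eab) => /eqP ->; apply: inQ; lia.
  case/orP: (nb k b eab) => /eqP ->; first by apply: inQ; lia.
  case: (ltnP k.+2 m) => h; first exact: inQ.
  by have -> : k.+2 = m by lia.
have allQ y : Q y by apply: (connect_ind cl _ (con x0 y)); apply: (inQ 0); lia.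
have mn : m = n.
  apply/eqP; rewrite eqn_leq; apply/andP; split.
    rewrite -cT -[m in m <= _]card_ord; apply: (@leq_card _ _ (fun i : 'I_m => w i)).
    by move=> i j /dist h; apply/val_inj/h.
  have m0 : 0 < m by lia.
  pose h y : 'I_m := odflt (Ordinal m0) [pick k : 'I_m | w k == y].
  have hK y : w (h y) = y.
    rewrite /h; case: pickP => [k /eqP //|none].
    by case/existsP: (allQ y) => k; rewrite none.
  rewrite -cT -[n in _ <= n]card_ord; apply: (leq_card h).
  by move=> a b hab; rewrite -(hK a) -(hK b) hab.
subst m.
pose sc i := if i.+1 == n then 0 else i.+1.
pose pr i := if i == 0 then n.-1 else i.-1.
have modS i : i < n -> i.+1 %% n = sc i.
  move=> hi; rewrite /sc; case: eqP => h; first by rewrite h modnn.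
  by rewrite modn_small; lia.
have scn i : i < n -> sc i < n by rewrite /sc; case: eqP; lia.
have prn i : i < n -> pr i < n by rewrite /pr; case: eqP; lia.
have scpr i : i < n -> sc (pr i) = i.
  move=> hi; rewrite /sc /pr; case: i hi => [|i] hi /=.
    by rewrite prednK ?eqxx //; lia.
  by case: eqP => //; lia.
have scpr_ne i : i < n -> sc i != pr i.
  move=> hi; rewrite /sc /pr; case: i hi => [|i] hi /=; case: ifP => /eqP h; lia.
have adjS i : i < n -> e (w i) (w (sc i)).
  move=> hi; rewrite /sc; case: eqP => h; last exact: adj.
  by rewrite -wm0 -h; apply: adj.
have n0 : 0 < n by lia.
pose f y : 'I_n := odflt (Ordinal n0) [pick k : 'I_n | w k == y].
have fK y : w (f y) = y.
  rewrite /f; case: pickP => [k /eqP //|none].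
  by case/existsP: (allQ y) => k; rewrite none.
have gK (i : 'I_n) : f (w i) = i.
  by apply/val_inj; apply: dist; [exact: ltn_ord|exact: ltn_ord|exact: fK].
exists f; split; first by exists (fun i : 'I_n => w i).
move=> x y; move: (f x) (f y) (fK x) (fK y) => i j <- <-.
rewrite /cycle_rel !modS //.
apply/idP/idP.
- move=> eij.
  have ep : e (w i) (w (pr i)) by rewrite sym -{2}(scpr i) //; apply: adjS; apply: prn.
  have nn : w (sc i) != w (pr i).
    apply/eqP => h; have := dist _ _ (scn i (ltn_ord i)) (prn i (ltn_ord i)) h.
    by move/eqP: (scpr_ne i (ltn_ord i)).
  case/orP: (nb2 (d2 _) (adjS i (ltn_ord i)) ep nn eij) => /eqP h.
    by rewrite (dist _ _ (ltn_ord j) (scn i (ltn_ord i)) h) eqxx.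
  by rewrite (dist _ _ (ltn_ord j) (prn i (ltn_ord i)) h) scpr // eqxx orbT.
- case/orP => /eqP h; first by rewrite h adjS.
  by rewrite h sym adjS.
Qed.


Lemma cycle_deg2 (T : finType) (e : rel T) (n : nat) :
  3 <= n -> iso_cycle e n -> forall x, deg e x = 2.
Proof.
move=> n3 [f [fb fe]] x.
pose R := [set j : 'I_n | cycle_rel (f x) j].
have -> : deg e x = #|f @^-1: R|.
  by rewrite /deg; apply: eq_card => y; rewrite !inE fe.
rewrite (on_card_preimset (onW_bij _ fb)).
rewrite /R; clear R; move: (f x) => i; have iln := ltn_ord i.
pose sc k := if k.+1 == n then 0 else k.+1.
pose pr k := if k == 0 then n.-1 else k.-1.
have modS k : k < n -> k.+1 %% n = sc k.
  move=> hi; rewrite /sc; case: eqP => h; first by rewrite h modnn.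
  by rewrite modn_small; lia.
have scn : sc i < n by rewrite /sc; case: eqP; lia.
have prn : pr i < n by rewrite /pr; case: eqP; lia.
have -> : [set j : 'I_n | cycle_rel i j] = [set Ordinal scn; Ordinal prn].
  apply/setP => j; have jln := ltn_ord j; rewrite !inE /cycle_rel !modS //.
  rewrite -!(inj_eq val_inj) /=.
  congr (_ || _); apply/eqP/eqP; rewrite /sc /pr;
    case: ifP => /eqP h1; case: ifP => /eqP h2; lia.
rewrite cards2 -(inj_eq val_inj) /= /sc /pr.
by case: ifP => /eqP h1; case: ifP => /eqP h2; apply/eqP; lia.
Qed.


Lemma absD (a b : nat) : (`|(a%:R - b%:R : rat)| = ((a - b) + (b - a))%N%:R)%R.
Proof.
case: (leqP a b) => h.
  have -> : (a - b)%N = 0%N by lia.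
  by rewrite add0n distrC ger0_norm ?subr_ge0 ?ler_nat // natrB.
have -> : (b - a)%N = 0%N by lia.
by rewrite addn0 ger0_norm ?subr_ge0 ?ler_nat ?natrB // ltnW.
Qed.

Definition Dn (u v : nat) := ((u - v) + (v - u))%N.

Lemma irrE (T : finType) (e : rel T) :
  irr_t e = (1 / 2 * (\sum_x \sum_y Dn (deg e x) (deg e y))%:R)%R.
Proof.
rewrite /irr_t natr_sum; congr (_ * _)%R; apply: eq_bigr => x _.
by rewrite natr_sum; apply: eq_bigr => y _; rewrite absD.
Qed.

Lemma half_eq (k m : nat) : (1 / 2 * k%:R = m%:R :> rat)%R <-> k = (2 * m)%N.
Proof.
split => h.
  apply/eqP; rewrite -(eqr_nat rat) natrM; apply/eqP; lra.
by rewrite h natrM; lra.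
Qed.

Lemma half_le (k m : nat) : (m%:R <= 1 / 2 * k%:R :> rat)%R <-> (2 * m <= k)%N.
Proof.
rewrite -(ler_nat rat) natrM.
have E : (1 / 2 * k%:R = (1 / 2) * (k%:R : rat))%R by [].
split => h; lra.
Qed.

Lemma split2 (T : finType) (F : T -> nat) (a b : T) : a != b ->
  \sum_x F x = F a + F b + \sum_(x | (x != a) && (x != b)) F x.
Proof.
move=> nab; rewrite (bigD1 a) // (bigD1 b) //= 1?eq_sym // addnA; congr (_ + _); apply: eq_bigl => x; rewrite andbC.
Qed.


Lemma sum_seq (T : finType) (d : T -> nat) (F : nat -> nat) :
  \sum_x F (d x) = \sum_(u <- [seq d x | x <- enum T]) F u.
Proof. by rewrite big_map big_enum /=; apply: eq_bigl => x; rewrite inE. Qed.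

Lemma count_seq (T : finType) (d : T -> nat) (q : pred nat) :
  count q [seq d x | x <- enum T] = \sum_x (q (d x) : nat).
Proof.
rewrite -sum1_count big_map big_enum_cond big_mkcond /=.
by apply: eq_bigr => x _; case: (q (d x)).
Qed.

Lemma target_sorted k : sorted geq (3 :: nseq k 2 ++ [:: 1]).
Proof.
have H : forall k, path geq 2 (nseq k 2 ++ [:: 1]) by elim=> //= k' ->; rewrite leqnn.
by case: k => //= k; rewrite H.
Qed.

Lemma target_S k : \sum_(u <- 3 :: nseq k 2 ++ [:: 1]) \sum_(v <- 3 :: nseq k 2 ++ [:: 1]) Dn u v
   = 4 * k + 4.
Proof.
rewrite !big_cons !big_cat !big_nseq !big_seq1 /= !big_cons !big_cat !big_nseq !big_seq1 /=.
rewrite !iter_addn_0 /Dn /=; lia.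
Qed.

Unset Implicit Arguments. Set Strict Implicit.

Theorem theorem9 (T : finType) (e : rel T) (n : nat) :
  3 <= n -> #|T| = n -> unicyclic e ->
  ((0 <= irr_t e)%R /\ (irr_t e = 0%R <-> iso_cycle e n)) /\
  (4 <= n -> ~ iso_cycle e n ->
     ((2 * n - 2)%:R <= irr_t e)%R /\
     (irr_t e = (2 * n - 2)%:R%R <-> degseq e = 3 :: nseq (n - 2) 2 ++ [:: 1])).
Proof.
move=> n3 cT [[sym irr] [con cE]].
have dsum : \sum_x deg e x = 2 * n by rewrite deg_sum // cE cT.
have dpos x : 0 < deg e x.
  have [y yx] : exists y, y != x.
    have : 0 < #|predC1 x| by rewrite cardC1 cT; lia.
    by case/card_gt0P => y; rewrite inE => yx; exists y.
  case/connectP: (con x y) => [[|z p]] /=; first by move=> _ h; rewrite h eqxx in yx.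
  case/andP=> exz _ _; apply/card_gt0P; exists z; by rewrite inE.
have n0 : 0 < n by lia.
have sumc c : \sum_(x : T) c = n * c by rewrite sum_nat_const cT.
rewrite irrE.
set S := \sum_x \sum_y Dn (deg e x) (deg e y).
have all2 : (forall x, deg e x = 2) <-> S = 0.
  split=> [H|].
    by rewrite /S big1 // => x _; rewrite big1 // => y _; rewrite /Dn !H.
  move/eqP; rewrite sum_nat_eq0 => /forallP H.
  have eqd x y : deg e x = deg e y.
    move: (H x) => /=; rewrite sum_nat_eq0 => /forallP/(_ y) /= /eqP; rewrite /Dn; lia.
  move=> x; have : \sum_(y : T) deg e y = n * deg e x.
    by rewrite -sumc; apply: eq_bigr => y _; apply: eqd.
  rewrite dsum => h; apply/eqP; rewrite -(eqn_pmul2l n0); apply/eqP; lia.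
split.
  split; first by have := ler0n rat S; lra.
  split.
    move/(half_eq S 0); rewrite muln0 -all2 => H.
    exact: two_reg_cycle.
  move/(cycle_deg2 n3)/all2 => ->; apply/(half_eq 0 0).
  done.
move=> n4 niso.
have nall : ~ (forall x, deg e x = 2) by move=> h; apply: niso; exact: two_reg_cycle.
have [x dx] : exists x, deg e x != 2.
  case: (boolP [exists x, deg e x != 2]) => [/existsP //|].
  by rewrite negb_exists => /forallP h; case: nall => x; move: (h x); rewrite negbK => /eqP.
have sum_lt (F G : T -> nat) (c : T) : (forall y, F y <= G y) -> F c < G c ->
    \sum_y F y < \sum_y G y.
  move=> le lt; rewrite (bigD1 c) //= [X in _ < X](bigD1 c) //=.
  have : \sum_(y | y != c) F y <= \sum_(y | y != c) G y by apply: leq_sum => y _; exact: le.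
  lia.
have [a da] : exists a, 3 <= deg e a.
  case: (boolP [exists a, 3 <= deg e a]) => [/existsP //|].
  rewrite negb_exists => /forallP h.
  have : \sum_y deg e y < \sum_(y : T) 2.
    apply: (sum_lt (deg e) (fun=> 2) x) => [y|]; [move: (h y)|move: (h x)]; lia.
  by rewrite dsum sumc; lia.
have [b db] : exists b, deg e b = 1.
  case: (boolP [exists b, deg e b <= 1]) => [/existsP [b hb]|].
    by exists b; have := dpos b; lia.
  rewrite negb_exists => /forallP h.
  have : \sum_(y : T) 2 < \sum_y deg e y.
    apply: (sum_lt (fun=> 2) (deg e) a) => [y|]; [move: (h y)|move: (h a)]; lia.
  by rewrite dsum sumc; lia.
have nab : a != b by apply/eqP => h; move: da; rewrite h db.
pose P x := (x != a) && (x != b).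
have Dsym u v : Dn u v = Dn v u by rewrite /Dn addnC.
have D0 u : Dn u u = 0 by rewrite /Dn subnn.
pose Dab := Dn (deg e a) (deg e b).
have cnt : \sum_(x | P x) 1 = n - 2.
  move: (split2 (fun _ => 1) nab); rewrite sumc /P /=; lia.
have sumPc c : \sum_(x | P x) c = c * (n - 2).
  by rewrite -cnt big_distrr /=; apply: eq_bigr => ? _; rewrite muln1.
pose s y := Dn (deg e a) (deg e y) + Dn (deg e b) (deg e y) - Dab.
pose M := \sum_(x | P x) \sum_(y | P y) Dn (deg e x) (deg e y).
have SE : S = 2 * Dab + 2 * (Dab * (n - 2) + \sum_(y | P y) s y) + M.
  have R z : \sum_y Dn (deg e z) (deg e y) = Dn (deg e z) (deg e a) + Dn (deg e z) (deg e b) +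
      \sum_(y | P y) Dn (deg e z) (deg e y) by rewrite (split2 _ nab).
  have E1 := split2 (fun x => \sum_y Dn (deg e x) (deg e y)) nab.
  have E2 : \sum_(x | P x) \sum_y Dn (deg e x) (deg e y) =
     \sum_(x | P x) (Dn (deg e a) (deg e x) + Dn (deg e b) (deg e x)) + M.
    rewrite -big_split; apply: eq_bigr => z _ /=.
    by rewrite R (Dsym (deg e z)) (Dsym (deg e z)).
  have E3 : \sum_(x | P x) (Dn (deg e a) (deg e x) + Dn (deg e b) (deg e x)) = Dab * (n - 2) + \sum_(y | P y) s y.
    rewrite -sumPc -big_split /=; apply: eq_bigr => y _; rewrite /s /Dab /Dn; lia.
  have E4 : \sum_(x | P x) (Dn (deg e a) (deg e x) + Dn (deg e b) (deg e x)) =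
     \sum_(x | P x) Dn (deg e a) (deg e x) + \sum_(x | P x) Dn (deg e b) (deg e x) by rewrite big_split.
  have Ra := R a; have Rb := R b.
  rewrite D0 in Ra; rewrite D0 Dsym in Rb.
  rewrite /S E1 /= Ra Rb E2.
  rewrite E4 in E3; rewrite /Dab; lia.
have Dab1 : Dab = deg e a - 1 by rewrite /Dab /Dn db; lia.
have lb : 2 * (n - 2) <= Dab * (n - 2) by apply: leq_mul => //; lia.
split; first by apply/half_le; lia.
pose tg := 3 :: nseq (n - 2) 2 ++ [:: 1].
have geq_tot : total geq by move=> u v; apply: leq_total.
have geq_tr : transitive geq by move=> u v w h1 h2; apply: leq_trans h2 h1.
have geq_anti : antisymmetric geq by move=> u v h; apply: anti_leq; rewrite andbC.
split.
  move/half_eq => HS.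
  have DabE : Dab = 2.
    case: (ltnP 2 Dab) => h; last by lia.
    by have := leq_mul h (leqnn (n - 2)); lia.
  have M0 : M = 0 by lia.
  have da3 : deg e a = 3 by lia.
  have eqPd u y : P u -> P y -> deg e u = deg e y.
    move=> Px Py; move/eqP: M0; rewrite sum_nat_eq0 => /forallP /(_ u) /implyP /(_ Px).
    rewrite sum_nat_eq0 => /forallP /(_ y) /implyP /(_ Py) /eqP; rewrite /Dn; lia.
  have [z0 Pz0] : exists z, P z.
    case: (boolP [exists z, P z]) => [/existsP //|]; rewrite negb_exists => /forallP h.
    by move: cnt; rewrite big_pred0 => [|z]; [lia|exact: negbTE (h z)].
  have sP : \sum_(x | P x) deg e x = deg e z0 * (n - 2).
    by rewrite -sumPc; apply: eq_bigr => y Py; apply: eqPd.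
  have z2 : deg e z0 = 2.
    have := split2 (deg e) nab; rewrite dsum da3 db sP => h.
    apply/eqP; rewrite -(@eqn_pmul2r (n - 2)); last by lia.
    by apply/eqP; lia.
  have d2P u : P u -> deg e u = 2 by move=> Px; rewrite (eqPd u z0).
  rewrite /degseq.
  have pe : perm_eq [seq deg e x | x <- enum T] tg.
    apply/permP => q; rewrite count_seq (split2 _ nab) /tg /= count_cat count_nseq /=.
    rewrite da3 db (eq_bigr (fun _ => q 2 : nat)); last by move=> y Py; rewrite d2P.
    rewrite sumPc; lia.
  rewrite (perm_sortP geq_tot geq_tr geq_anti _ _ pe) sorted_sort //.
  exact: target_sorted.
move=> H; apply/half_eq.
have pe : perm_eq [seq deg e x | x <- enum T] tg.
  rewrite -(perm_sort geq); change (perm_eq (degseq e) tg); rewrite H perm_refl //.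
rewrite /S (eq_bigr (fun x => \sum_(v <- [seq deg e x | x <- enum T]) Dn (deg e x) v)); last first.
  by move=> z _; rewrite (sum_seq (deg e) (Dn (deg e z))).
rewrite (sum_seq (deg e) (fun u => \sum_(v <- [seq deg e x | x <- enum T]) Dn u v)).
rewrite (perm_big _ pe) /=.
rewrite (eq_bigr (fun u => \sum_(v <- tg) Dn u v)); last by move=> u _; rewrite (perm_big _ pe).
rewrite target_S; lia.
Qed.
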